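(* The category $\mathbf{MetCH_{sep}}^{\mathrm{op}}$ is a regular category.
   Context: A metric on a set $X$ is a map $d\colon X\times X\to[0,\infty]$ (not necessarily symmetric, the value $\infty$ allowed) with $d(x,x)=0$ and $d(x,z)\le d(x,y)+d(y,z)$; it is separated if $d(x,y)=0=d(y,x)$ implies $x=y$. The upper topology on $[0,\infty]$ has as nonempty proper open sets the sets $]u,\infty]$. A separated metric compact Hausdorff space is a compact Hausdorff space $X$ with a separated metric $d$ continuous as a map $X\times X\to[0,\infty]$ with the upper topology on $[0,\infty]$. $\mathbf{MetCH_{sep}}$ is the category of such spaces and continuous non-expansive maps ($d_Y(f(x),f(y))\le d_X(x,y)$). A category is regular if it is finitely complete, has coequalisers of kernel pairs, and regular epimorphisms are stable under pullback. *)

(* Defs.v *)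
From HB Require Import structures.
From mathcomp Require Import all_boot all_order all_algebra.
From mathcomp Require Import all_classical all_reals.
From mathcomp Require Import topology ereal.
From mathcomp Require Import Rstruct Rstruct_topology.
Set Implicit Arguments. Unset Strict Implicit. Unset Printing Implicit Defensive.
Import Order.TTheory GRing.Theory Num.Theory.

Record category := Category {
  ob :> Type;
  hom : ob -> ob -> Type;
  idm : forall a, hom a a;
  comp : forall a b c, hom b c -> hom a b -> hom a c;
  comp_idl : forall a b (f : hom a b), comp (idm b) f = f;
  comp_idr : forall a b (f : hom a b), comp f (idm a) = f;
  comp_assoc : forall a b c d (f : hom a b) (g : hom b c) (h : hom c d),
    comp h (comp g f) = comp (comp h g) f }.

Arguments hom {C} a b : rename.
Arguments idm {C} a : rename.
Arguments comp {C a b c} _ _ : rename.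

Definition op (C : category) : category :=
  @Category C (fun a b => @hom C b a) (fun a => @idm C a)
    (fun a b c (g : @hom C c b) (f : @hom C b a) => comp f g)
    (fun a b f => comp_idr f) (fun a b f => comp_idl f)
    (fun a b c d f g h => esym (comp_assoc h g f)).

Section CatDefs.
Variable C : category.

Definition is_terminal (t : C) := forall a : C, exists! f : hom a t, True.

Definition is_pullback (a b c : C) (f : hom a c) (g : hom b c)
    (p : C) (p1 : hom p a) (p2 : hom p b) :=
  comp f p1 = comp g p2 /\
  forall (q : C) (q1 : hom q a) (q2 : hom q b), comp f q1 = comp g q2 ->
    exists! u : hom q p, comp p1 u = q1 /\ comp p2 u = q2.

Definition is_kernel_pair (a b : C) (f : hom a b) (p : C) (p1 p2 : hom p a) :=
  is_pullback f f p1 p2.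

Definition is_coequaliser (a b : C) (u v : hom a b) (q : C) (e : hom b q) :=
  comp e u = comp e v /\
  forall (z : C) (h : hom b z), comp h u = comp h v ->
    exists! k : hom q z, comp k e = h.

Definition regular_epi (b q : C) (e : hom b q) :=
  exists (a : C) (u v : hom a b), is_coequaliser u v e.

Definition finitely_complete :=
  (exists t : C, is_terminal t) /\
  forall (a b c : C) (f : hom a c) (g : hom b c),
    exists (p : C) (p1 : hom p a) (p2 : hom p b), is_pullback f g p1 p2.

Definition has_coequalisers_of_kernel_pairs :=
  forall (a b : C) (f : hom a b) (p : C) (p1 p2 : hom p a),
    is_kernel_pair f p1 p2 -> exists (q : C) (e : hom a q), is_coequaliser p1 p2 e.

Definition regular_epis_pullback_stable :=
  forall (a b c : C) (f : hom a c) (g : hom b c) (p : C) (p1 : hom p a)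
    (p2 : hom p b), regular_epi f -> is_pullback f g p1 p2 -> regular_epi p2.

Definition regular_category :=
  [/\ finitely_complete, has_coequalisers_of_kernel_pairs
    & regular_epis_pullback_stable].

End CatDefs.

Local Open Scope classical_set_scope.
Local Open Scope ereal_scope.

Record metCH_sep := MetCHsep {
  mc_car :> topologicalType;
  mc_d : mc_car -> mc_car -> \bar Rdefinitions.R;
  mc_d_ge0 : forall x y, 0 <= mc_d x y;
  mc_d_refl : forall x, mc_d x x = 0;
  mc_d_triangle : forall x y z, mc_d x z <= mc_d x y + mc_d y z;
  mc_d_sep : forall x y, mc_d x y = 0 -> mc_d y x = 0 -> x = y;
  mc_hausdorff : hausdorff_space mc_car;
  mc_compact : compact [set: mc_car];
  (* continuity of d : X x X -> [0,oo] for the upper topology, whose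
     nonempty proper open sets are ]u, oo] for u in [0, oo[ *)
  mc_d_cont : forall u : Rdefinitions.R, (0 <= u)%R ->
    open [set pq : mc_car * mc_car | u%:E < mc_d pq.1 pq.2] }.

Record mc_hom (X Y : metCH_sep) := MCHom {
  mc_fun :> X -> Y;
  mc_fun_cont : continuous mc_fun;
  mc_fun_nonexp : forall x y, mc_d (mc_fun x) (mc_fun y) <= mc_d x y }.

Lemma mc_hom_eq (X Y : metCH_sep) (f g : mc_hom X Y) :
  mc_fun f = mc_fun g -> f = g.
Proof.
case: f g => f1 c1 n1 [f2 c2 n2] /= E; subst f2.
by rewrite (Prop_irrelevance c1 c2) (Prop_irrelevance n1 n2).
Qed.

Definition mc_id (X : metCH_sep) : mc_hom X X.
Proof. by apply: (@MCHom X X id) => // x; exact: cvg_id. Defined.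

Definition mc_comp (X Y Z : metCH_sep) (g : mc_hom Y Z) (f : mc_hom X Y) :
  mc_hom X Z.
Proof.
apply: (@MCHom X Z (g \o f)).
- by move=> x; apply: continuous_comp; [exact: mc_fun_cont|exact: mc_fun_cont].
- by move=> x y /=; apply: le_trans (mc_fun_nonexp g _ _) (mc_fun_nonexp f _ _).
Defined.

Definition MetCH_sep : category.
Proof.
refine (@Category metCH_sep mc_hom mc_id mc_comp _ _ _).
- by move=> a b f; apply: mc_hom_eq.
- by move=> a b f; apply: mc_hom_eq.
- by move=> a b c d f g h; apply: mc_hom_eq.
Defined.

(* Main.v *)
Require Import Defs.
From mathcomp Require Import all_boot.
From HB Require Import structures.
From mathcomp Require Import all_boot all_order all_algebra.
From mathcomp Require Import all_classical all_reals.
From mathcomp Require Import topology ereal.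
From mathcomp Require Import Rstruct Rstruct_topology.
From mathcomp Require Import ring lra.
Set Implicit Arguments. Unset Strict Implicit. Unset Printing Implicit Defensive.
Import Order.TTheory GRing.Theory Num.Theory.
Local Open Scope classical_set_scope.
Local Open Scope ereal_scope.

Local Notation R := Rdefinitions.R.

Definition lsc (T : topologicalType) (F : T -> \bar R) :=
  forall r : R, open [set x | r%:E < F x].

Lemma split_lt (r : R) (x y : \bar R) : 0 <= x -> 0 <= y -> r%:E < x + y ->
  exists s t : R, [/\ s%:E < x, t%:E < y & (r <= s + t)%R].
Proof.
case: x => [a| |] //; case: y => [b| |] //.
- rewrite !lee_fin -EFinD lte_fin => a0 b0 rab.
  pose e := ((a + b - r) / 2)%R.
  have e0 : (0 < e)%R by rewrite /e divr_gt0 // subr_gt0.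
  exists (a - e)%R, (b - e)%R; split.
  + by rewrite lte_fin ltrBlDr ltrDl.
  + by rewrite lte_fin ltrBlDr ltrDl.
  + by rewrite /e; lra.
- move=> a0 _ _; exists (-1)%R, (r + 1)%R; split.
  + by apply: lt_le_trans a0; rewrite lte_fin ltrN10.
  + exact: ltry.
  + by clear a0; lra.
- move=> _ b0 _; exists (r + 1)%R, (-1)%R; split.
  + exact: ltry.
  + by apply: lt_le_trans b0; rewrite lte_fin ltrN10.
  + by clear b0; lra.
- by move=> _ _ _; exists r, 0%R; split; [exact: ltry|exact: ltry|lra].
Qed.


Definition emin (x y : \bar R) := if x <= y then x else y.

Lemma emin_l x y : emin x y <= x.
Proof. by rewrite /emin; case: ifP => // /negbT; rewrite -ltNge => /ltW. Qed.

Lemma emin_r x y : emin x y <= y.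
Proof. by rewrite /emin; case: ifP. Qed.

Lemma emin_glb z x y : z <= x -> z <= y -> z <= emin x y.
Proof. by rewrite /emin; case: ifP. Qed.

Lemma emin_lt z x y : z < x -> z < y -> z < emin x y.
Proof. by rewrite /emin; case: ifP. Qed.

Lemma lt_emin z x y : z < emin x y -> z < x /\ z < y.
Proof. by move=> h; split; apply: lt_le_trans h _; [exact: emin_l|exact: emin_r]. Qed.

Section lsc_lemmas.
Context {T : topologicalType}.

Lemma lsc_near (F : T -> \bar R) (r : R) x :
  lsc F -> r%:E < F x -> \forall y \near x, r%:E < F y.
Proof. by move=> lF rF; apply: open_nbhs_nbhs; split => //; exact: lF. Qed.

Lemma lscP (F : T -> \bar R) :
  (forall (r : R) x, r%:E < F x -> \forall y \near x, r%:E < F y) -> lsc F.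
Proof. by move=> H r; rewrite openE => x /= /H. Qed.

Lemma lsc_add (F G : T -> \bar R) : (forall x, 0 <= F x) -> (forall x, 0 <= G x) ->
  lsc F -> lsc G -> lsc (fun x => F x + G x).
Proof.
move=> F0 G0 lF lG; apply: lscP => r x /(split_lt (F0 x) (G0 x)) [s [t [sF tG rst]]].
near=> y.
have h1 : s%:E < F y by near: y; exact: lsc_near.
have h2 : t%:E < G y by near: y; exact: lsc_near.
have h3 := lteD h1 h2; apply: le_lt_trans h3; by rewrite -EFinD lee_fin.
Unshelve. all: end_near.
Qed.

Lemma lsc_min (F G : T -> \bar R) : lsc F -> lsc G -> lsc (fun x => emin (F x) (G x)).
Proof.
move=> lF lG; apply: lscP => r x /lt_emin [h1 h2].
near=> y; apply: emin_lt.
- by near: y; exact: lsc_near.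
- by near: y; exact: lsc_near.
Unshelve. all: end_near.
Qed.

Lemma lsc_comp (S : topologicalType) (h : S -> T) (F : T -> \bar R) :
  continuous h -> lsc F -> lsc (F \o h).
Proof. by move=> ch lF r; exact: (proj1 (continuousP h) ch _ (lF r)). Qed.

End lsc_lemmas.

Lemma tube (X Y : topologicalType) (K : set Y) (W : set (X * Y)) x :
  compact K -> open W -> (forall y, K y -> W (x, y)) ->
  \forall x' \near x, forall y, K y -> W (x', y).
Proof.
move=> /compact_near_coveringP cK oW KW.
apply: (cK X (nbhs x) (fun x' y => W (x', y))) => y Ky.
have : nbhs (x, y) W by apply: open_nbhs_nbhs; split => //; exact: KW.
case=> [[P Q] [Px Qy] PQW]; exists (Q, P) => //= -[y' x'] /= [Qy' Px'].
exact: PQW.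
Qed.

Lemma inf_lsc (X C : topologicalType) (F : X -> C -> \bar R) :
  compact [set: C] -> lsc (fun p : X * C => F p.1 p.2) ->
  lsc (fun x => ereal_inf (range (F x))).
Proof.
move=> cC lF; apply: lscP => r x rx.
have [r' [rr' r'x]] : exists r' : R, (r < r')%R /\ r'%:E < ereal_inf (range (F x)).
  move: rx; case: (ereal_inf _) => [a| |] //.
  - rewrite lte_fin => ra; exists ((r + a) / 2)%R; split; first lra.
    by rewrite lte_fin; lra.
  - by move=> _; exists (r + 1)%R; split; [lra | exact: ltry].
have := @tube X C setT _ x cC (lF r').
have /[swap]/[apply] : forall c, setT c -> r'%:E < F x c.
  move=> c _; apply: (lt_le_trans r'x); apply: ereal_inf_lbound; by exists c.
apply: filterS => x' H.
apply: (@lt_le_trans _ _ r'%:E); first by rewrite lte_fin.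
apply/ereal_infP => _ [c _ <-]; apply/ltW; exact: H.
Qed.

Lemma inf_pos (C : topologicalType) (G : C -> \bar R) :
  compact [set: C] -> lsc G -> (forall c, 0 < G c) -> 0 < ereal_inf (range G).
Proof.
move=> /compact_near_coveringP cC lG G0.
have : \forall r \near (0%R : R), [set: C] `<=` (fun c => r%:E < G c).
  apply: (cC R (nbhs (0%R : R)) (fun r c => r%:E < G c)) => c _.
  have [r0 [r00 r0G]] : exists r0 : R, (0 < r0)%R /\ r0%:E < G c.
    move: (G0 c); case: (G c) => [a| |] //.
    - rewrite lte_fin => a0; exists (a / 2)%R; split; first lra.
      by rewrite lte_fin; lra.
    - by move=> _; exists 1%R; split; [lra | exact: ltry].
  exists ([set c' | r0%:E < G c'], [set r | (r < r0)%R]).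
    split; first exact: lsc_near.
    exact: nbhs0_lt.
  move=> [c' r] [/= h1 h2]; apply: lt_trans h1; by rewrite lte_fin.
case=> e /= e0 He.
have he : [set: C] `<=` (fun c => (e / 2)%:E < G c).
  apply: He; rewrite /ball /= sub0r normrN ger0_norm; lra.
apply: (@lt_le_trans _ _ (e / 2)%:E); first by rewrite lte_fin; lra.
apply/ereal_infP => _ [c _ <-]; apply/ltW; exact: he.
Qed.

Definition sumT (A B : topologicalType) := (A + B)%type.
HB.instance Definition _ (A B : topologicalType) := Choice.on (sumT A B).

Section sum_topology.
Context (A B : topologicalType).

Definition sum_open (U : set (sumT A B)) :=
  open (inl @^-1` U : set A) /\ open (inr @^-1` U : set B).

Lemma sum_openT : sum_open setT.
Proof. by split; rewrite preimage_setT; exact: openT. Qed.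

Lemma sum_openI : setI_closed sum_open.
Proof. by move=> U V [U1 U2] [V1 V2]; split; rewrite preimage_setI; exact: openI. Qed.

Lemma sum_open_bigU (I : Type) (f : I -> set (sumT A B)) :
  (forall i, sum_open (f i)) -> sum_open (\bigcup_i f i).
Proof.
move=> fo; split; rewrite preimage_bigcup; apply: bigcup_open => i _; by case: (fo i).
Qed.

HB.instance Definition _ := isOpenTopological.Build (sumT A B)
  sum_openT sum_openI sum_open_bigU.

Lemma sum_openE (U : set (sumT A B)) : open U <-> sum_open U.
Proof. by []. Qed.

Lemma inl_continuous : continuous (inl : A -> sumT A B).
Proof. by apply/continuousP => U [] . Qed.

Lemma inr_continuous : continuous (inr : B -> sumT A B).
Proof. by apply/continuousP => U [] . Qed.

Lemma inl_open (P : set A) : open P -> open (inl @` P : set (sumT A B)).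
Proof.
move=> oP; split.
- rewrite (_ : _ @^-1` _ = P) //; apply/seteqP; split => [x [y Py [<-]]//|x Px].
  by exists x.
- rewrite (_ : _ @^-1` _ = set0); first exact: open0.
  by apply/seteqP; split => [x [y _ //]|x].
Qed.

Lemma inr_open (P : set B) : open P -> open (inr @` P : set (sumT A B)).
Proof.
move=> oP; split.
- rewrite (_ : _ @^-1` _ = set0); first exact: open0.
  by apply/seteqP; split => [x [y _ //]|x].
- rewrite (_ : _ @^-1` _ = P) //; apply/seteqP; split => [x [y Py [<-]]//|x Px].
  by exists x.
Qed.

Lemma inl_nbhs (a : A) (P : set A) : nbhs a P -> nbhs (inl a : sumT A B) (inl @` P).
Proof.
rewrite nbhsE => -[O [oO Oa] OP]; rewrite nbhsE; exists (inl @` O).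
  by split; [exact: inl_open | exists a].
by move=> _ [x Ox <-]; exists x => //; exact: OP.
Qed.

Lemma inr_nbhs (b : B) (P : set B) : nbhs b P -> nbhs (inr b : sumT A B) (inr @` P).
Proof.
rewrite nbhsE => -[O [oO Oa] OP]; rewrite nbhsE; exists (inr @` O).
  by split; [exact: inr_open | exists b].
by move=> _ [x Ox <-]; exists x => //; exact: OP.
Qed.

Lemma sum_continuous (Z : topologicalType) (f : sumT A B -> Z) :
  continuous (f \o inl) -> continuous (f \o inr) -> continuous f.
Proof.
move=> /continuousP c1 /continuousP c2; apply/continuousP => O oO; split.
- exact: c1.
- exact: c2.
Qed.

Lemma sum_compact : compact [set: A] -> compact [set: B] -> compact [set: sumT A B].
Proof.
move=> cA cB.
have -> : [set: sumT A B] = (inl @` setT) `|` (inr @` setT).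
  by apply/seteqP; split => [[a|b] _|//]; [left|right]; exists a + exists b.
apply: compactU; apply: continuous_compact => //;
  apply: continuous_subspaceT; [exact: inl_continuous|exact: inr_continuous].
Qed.

Lemma sum_hausdorff : hausdorff_space A -> hausdorff_space B ->
  hausdorff_space (sumT A B).
Proof.
rewrite !open_hausdorff => hA hB x y neq.
have H (U V : set (sumT A B)) : U x -> V y -> open U -> open V ->
    (forall z, U z -> V z -> False) ->
    exists2 AB : set (sumT A B) * set (sumT A B), x \in AB.1 /\ y \in AB.2 &
      [/\ open AB.1, open AB.2 & AB.1 `&` AB.2 == set0].
  move=> Ux Vy oU oV UV; exists (U, V); rewrite /= ?inE //.
  split => //; have h : U `&` V = set0 by rewrite -subset0 => z [Uz Vz]; exact: (UV z).
  exact: h.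
case: x y neq H => [a|b] [a'|b'] neq H.
- have /hA [[U V] /= [Ua Va] [oU oV /eqP UV]] : a != a'.
    by apply: contra neq => /eqP ->.
  rewrite inE in Ua; rewrite inE in Va.
  apply: (H (inl @` U) (inl @` V)); [by exists a|by exists a'|exact: inl_open|exact: inl_open|].
  move=> _ [u Uu <-] [v Vv [uv]]; have : (U `&` V) u by split => //; rewrite -uv.
  by rewrite UV.
- apply: (H (inl @` setT) (inr @` setT)); [by exists a|by exists b'|exact/inl_open/openT|exact/inr_open/openT|].
  by move=> _ [u _ <-] [v _].
- apply: (H (inr @` setT) (inl @` setT)); [by exists b|by exists a'|exact/inr_open/openT|exact/inl_open/openT|].
  by move=> _ [u _ <-] [v _].
- have /hB [[U V] /= [Ua Va] [oU oV /eqP UV]] : b != b'.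
    by apply: contra neq => /eqP ->.
  rewrite inE in Ua; rewrite inE in Va.
  apply: (H (inr @` U) (inr @` V)); [by exists b|by exists b'|exact: inr_open|exact: inr_open|].
  move=> _ [u Uu <-] [v Vv [uv]]; have : (U `&` V) u by split => //; rewrite -uv.
  by rewrite UV.
Qed.

End sum_topology.

Lemma prod_map_continuous (X1 X2 Y1 Y2 : topologicalType) (f : X1 -> Y1) (g : X2 -> Y2) :
  continuous f -> continuous g -> continuous (fun p : X1 * X2 => (f p.1, g p.2)).
Proof.
move=> cf cg [x1 x2] W [[P Q] /= [Pf Qg] PQW].
exists (f @^-1` P, g @^-1` Q); first by split; [exact: cf | exact: cg].
by move=> [y1 y2] /= [h1 h2]; apply: PQW.
Qed.

Lemma pairl_continuous (X Y : topologicalType) (x : X) : continuous (fun y : Y => (x, y)).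
Proof.
move=> y W [[P Q] /= [Px Qy] PQW]; apply: filterS Qy => y' Qy'.
by apply: PQW; split => //=; exact: nbhs_singleton.
Qed.

Lemma pairr_continuous (X Y : topologicalType) (y : Y) : continuous (fun x : X => (x, y)).
Proof.
move=> x W [[P Q] /= [Px Qy] PQW]; apply: filterS Px => x' Px'.
by apply: PQW; split => //=; exact: nbhs_singleton.
Qed.

Lemma open_setX (X Y : topologicalType) (U : set X) (V : set Y) :
  open U -> open V -> open (U `*` V).
Proof.
move=> oU oV; rewrite openE => -[x y] [/= Ux Vy].
exists (U, V) => //; split; apply: open_nbhs_nbhs; split => //.
Qed.

Lemma prod_hausdorff (X Y : topologicalType) :
  hausdorff_space X -> hausdorff_space Y -> hausdorff_space (X * Y)%type.
Proof.
rewrite !open_hausdorff => hX hY [x1 x2] [y1 y2] neq.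
have H (U V : set (X * Y)%type) : U (x1, x2) -> V (y1, y2) -> open U -> open V ->
    (forall z, U z -> V z -> False) ->
    exists2 AB : set (X * Y)%type * set (X * Y)%type, (x1, x2) \in AB.1 /\ (y1, y2) \in AB.2 &
      [/\ open AB.1, open AB.2 & AB.1 `&` AB.2 == set0].
  move=> Ux Vy oU oV UV; exists (U, V); rewrite /= ?inE //.
  split => //; have h : U `&` V = set0 by rewrite -subset0 => z [Uz Vz]; exact: (UV z).
  exact: h.
have [e1|n1] := eqVneq x1 y1.
  have [e2|n2] := eqVneq x2 y2; first by rewrite e1 e2 eqxx in neq.
  have [[U V] /= [Ua Va] [oU oV /eqP UV]] := hY _ _ n2.
  rewrite inE in Ua; rewrite inE in Va.
  apply: (H (setT `*` U) (setT `*` V)) => //; try exact: open_setX openT _.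
  move=> [z1 z2] [_ h1] [_ h2]; have : (U `&` V) z2 by [].
  by rewrite UV.
have [[U V] /= [Ua Va] [oU oV /eqP UV]] := hX _ _ n1.
rewrite inE in Ua; rewrite inE in Va.
apply: (H (U `*` setT) (V `*` setT)) => //; try exact: open_setX _ openT.
move=> [z1 z2] [h1 _] [h2 _]; have : (U `&` V) z1 by [].
by rewrite UV.
Qed.

(* quotient of a compact Hausdorff space by a lsc pseudo-quasi-metric   *)

Record pqm (S : topologicalType) := PQM {
  pd : S -> S -> \bar R;
  pd_ge0 : forall x y, 0 <= pd x y;
  pd_refl : forall x, pd x x = 0;
  pd_tri : forall x y z, pd x z <= pd x y + pd y z;
  pd_lsc : lsc (fun p : S * S => pd p.1 p.2) }.

Section pqm_theory.
Context (S : topologicalType) (rho : pqm S).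
Local Notation d := (pd rho).

Definition eqv x y := d x y = 0 /\ d y x = 0.
Definition cls x := [set y | eqv x y].

Lemma eqv_refl x : eqv x x. Proof. by split; rewrite pd_refl. Qed.
Lemma eqv_sym x y : eqv x y -> eqv y x. Proof. by case. Qed.

Lemma le0_eq0 (a : \bar R) : 0 <= a -> a <= 0 -> a = 0.
Proof. by move=> h1 h2; apply/le_anti/andP. Qed.

Lemma eqv_trans x y z : eqv x y -> eqv y z -> eqv x z.
Proof.
move=> [h1 h2] [h3 h4]; split; apply: le0_eq0; rewrite ?pd_ge0 //.
- by apply: (le_trans (@pd_tri _ rho x y z)); rewrite h1 h3 adde0.
- by apply: (le_trans (@pd_tri _ rho z y x)); rewrite h2 h4 adde0.
Qed.

Lemma pd_eqv x x' y y' : eqv x x' -> eqv y y' -> d x y = d x' y'.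
Proof.
move=> [h1 h2] [h3 h4]; apply/le_anti/andP; split.
- apply: (le_trans (@pd_tri _ rho x x' y)); rewrite h1 add0e.
  by apply: (le_trans (@pd_tri _ rho x' y' y)); rewrite h4 adde0.
- apply: (le_trans (@pd_tri _ rho x' x y')); rewrite h2 add0e.
  by apply: (le_trans (@pd_tri _ rho x y y')); rewrite h3 adde0.
Qed.

Lemma cls_eq x y : cls x = cls y <-> eqv x y.
Proof.
split => [E|exy].
  have : cls y y by exact: eqv_refl.
  by rewrite -E.
apply/seteqP; split => z /=.
- by move=> xz; apply: eqv_trans xz; exact: eqv_sym.
- by move=> yz; apply: eqv_trans yz.
Qed.

Lemma pd_lsc_l x : lsc (d x).
Proof. move=> r; exact: (lsc_comp (@pairl_continuous _ _ x) (@pd_lsc _ rho) r). Qed.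

Lemma pd_lsc_r y : lsc (d^~ y).
Proof. move=> r; exact: (lsc_comp (@pairr_continuous _ _ y) (@pd_lsc _ rho) r). Qed.

Lemma cls_closed x : closed (cls x).
Proof.
have -> : cls x = ~` ([set y | 0%:E < d x y] `|` [set y | 0%:E < d y x]).
  apply/seteqP; split => y /=.
  - by move=> [-> ->] [|]; rewrite ltxx.
  - move=> /not_orP [h1 h2]; split; apply: le0_eq0; rewrite ?pd_ge0 //;
      by rewrite leNgt; apply/negP.
rewrite closedC; apply: openU; [exact: pd_lsc_l | exact: pd_lsc_r].
Qed.

Lemma W0_open : open [set p : S * S | 0%:E < d p.1 p.2 \/ 0%:E < d p.2 p.1].
Proof.
apply: openU; first exact: (@pd_lsc _ rho).
have := lsc_comp (@swap_continuous S S) (@pd_lsc _ rho) 0%R.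
by congr open.
Qed.

Lemma not_eqv x y : ~ eqv x y -> 0%:E < d x y \/ 0%:E < d y x.
Proof.
move=> ne; apply: contrapT => /not_orP [h1 h2]; apply: ne.
by split; apply: le0_eq0; rewrite ?pd_ge0 //; rewrite leNgt; apply/negP.
Qed.

Lemma sat_open (U : set S) : compact [set: S] -> open U ->
  open [set x | cls x `<=` U].
Proof.
move=> cS oU; rewrite openE => x /= xU.
have cC : compact (~` U).
  apply: (subclosed_compact _ cS) => //; exact: open_closedC.
have := @tube S S (~` U) _ x cC W0_open.
have /[swap]/[apply] : forall c, (~` U) c -> 0%:E < d x c \/ 0%:E < d c x.
  by move=> c Uc; apply: not_eqv => xc; exact: Uc (xU _ xc).
apply: filterS => x' H y x'y; apply: contrapT => Uy.
by case: x'y => h1 h2; case: (H y Uy); rewrite /= ?h1 ?h2 ltxx.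
Qed.

End pqm_theory.

Definition qtype (S : topologicalType) (rho : pqm S) :=
  {P : set S | exists x, P = cls rho x}.

HB.instance Definition _ (S : topologicalType) (rho : pqm S) :=
  gen_eqMixin (qtype rho).
HB.instance Definition _ (S : topologicalType) (rho : pqm S) :=
  gen_choiceMixin (qtype rho).

Section quotient.
Context (S : topologicalType) (rho : pqm S).
Local Notation d := (pd rho).
Local Notation Q := (qtype rho).

Definition qpi (x : S) : Q := exist _ (cls rho x) (ex_intro _ x erefl).
Definition qrep (P : Q) : S := sval (cid (proj2_sig P)).

Lemma qtype_eq (P P' : Q) : sval P = sval P' -> P = P'.
Proof.
case: P => P hP; case: P' => P' hP' /= E; subst P'.
by rewrite (Prop_irrelevance hP hP').
Qed.

Lemma qpiK (P : Q) : qpi (qrep P) = P.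
Proof.
apply: qtype_eq => /=; rewrite /qrep; case: (cid _) => x /= ->; done.
Qed.

Lemma qpi_eq x y : qpi x = qpi y <-> eqv rho x y.
Proof.
split => [E|/cls_eq E]; last by apply: qtype_eq.
by apply/cls_eq; move/(congr1 sval): E.
Qed.

Lemma qrep_eqv x : eqv rho (qrep (qpi x)) x.
Proof. by apply/qpi_eq; rewrite qpiK. Qed.

Lemma qpi_surj (P : Q) : exists x, qpi x = P.
Proof. by exists (qrep P); exact: qpiK. Qed.

Definition qopen (U : set Q) := open (qpi @^-1` U).

Lemma qopenT : qopen setT.
Proof. by rewrite /qopen preimage_setT; exact: openT. Qed.

Lemma qopenI : setI_closed qopen.
Proof. by move=> U V oU oV; rewrite /qopen preimage_setI; exact: openI. Qed.

Lemma qopen_bigU (I : Type) (f : I -> set Q) :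
  (forall i, qopen (f i)) -> qopen (\bigcup_i f i).
Proof. by move=> fo; rewrite /qopen preimage_bigcup; apply: bigcup_open => i _; exact: fo. Qed.

HB.instance Definition _ := isOpenTopological.Build Q qopenT qopenI qopen_bigU.

Lemma qopenE (U : set Q) : open U <-> open (qpi @^-1` U).
Proof. by []. Qed.

Lemma qpi_continuous : continuous qpi.
Proof. by apply/continuousP => U. Qed.

Lemma qpi_open_sat (O : set S) : open O -> (forall x y, O x -> eqv rho x y -> O y) ->
  open (qpi @` O).
Proof.
move=> oO sO; apply/qopenE.
have -> : qpi @^-1` (qpi @` O) = O; last by [].
apply/seteqP; split => [x [y Oy /qpi_eq yx]|x Ox]; last by exists x.
exact: sO yx.
Qed.

Definition qd (P P' : Q) := d (qrep P) (qrep P').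

Lemma qd_pi x y : qd (qpi x) (qpi y) = d x y.
Proof. by rewrite /qd (pd_eqv (qrep_eqv x) (qrep_eqv y)). Qed.

Lemma q_compact : compact [set: S] -> compact [set: Q].
Proof.
move=> cS; have -> : [set: Q] = qpi @` setT.
  by apply/seteqP; split => // P _; have [x <-] := qpi_surj P; exists x.
apply: continuous_compact => //; apply: continuous_subspaceT; exact: qpi_continuous.
Qed.

Lemma q_hausdorff : hausdorff_space S -> compact [set: S] -> hausdorff_space Q.
Proof.
move=> hS cS; rewrite open_hausdorff => P P' neq.
have [x ex] := qpi_surj P; have [y ey] := qpi_surj P'.
subst P P'.
have nxy : ~ eqv rho x y by move=> /qpi_eq E; rewrite E eqxx in neq.
  have [U [[oU KU] [V [oV LV UV]]]] : exists U, (open U /\ cls rho x `<=` U) /\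
    exists V, [/\ open V, cls rho y `<=` V & forall z, U z -> V z -> False].
  have [C /set_nbhsP [U [oU KU UC]] cCL] :
      filter_from (set_nbhs (cls rho x)) closure (~` cls rho y).
    apply: (compact_normal hS cS (@cls_closed _ rho x)).
    apply/set_nbhsP; exists (~` cls rho y); split => //.
    - by rewrite openC; exact: (@cls_closed _ rho).
    - move=> z xz yz; apply: nxy; apply: (eqv_trans xz); exact: eqv_sym.
  exists U; split => //; exists (~` closure C); split.
  - by rewrite openC; exact: closed_closure.
  - by move=> z yz /cCL; apply.
  - by move=> z Uz; apply; apply: subset_closure; exact: UC.
exists (qpi @` [set z | cls rho z `<=` U], qpi @` [set z | cls rho z `<=` V]) => /=.
  by rewrite !inE; split; [exists x | exists y].
split.
- apply: qpi_open_sat; first exact: sat_open.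
  by move=> a b /= aU ab c bc; apply: aU; apply: eqv_trans bc.
- apply: qpi_open_sat; first exact: sat_open.
  by move=> a b /= aU ab c bc; apply: aU; apply: eqv_trans bc.
- have h : qpi @` [set z | cls rho z `<=` U] `&` qpi @` [set z | cls rho z `<=` V] = set0.
    rewrite -subset0 => _ [[a aU <-] [b bV /qpi_eq ba]].
    apply: (UV a); first by apply: aU; exact: eqv_refl.
    by apply: bV; exact: ba.
  by apply/eqP; exact: h.
Qed.

Lemma qd_lsc : hausdorff_space S -> compact [set: S] ->
  lsc (fun p : Q * Q => qd p.1 p.2).
Proof.
move=> hS cS r.
pose K := [set p : S * S | d p.1 p.2 <= r%:E].
have cK : compact K.
  apply: (subclosed_compact _ (compact_setX cS cS)) => //.
  rewrite -openC (_ : ~` K = [set p | r%:E < d p.1 p.2]); first exact: (@pd_lsc _ rho).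
  by apply/seteqP; split => p /=; rewrite ltNge => /negP.
have pc : continuous (fun p : S * S => (qpi p.1, qpi p.2)).
  by apply: prod_map_continuous; exact: qpi_continuous.
have cimg := continuous_compact (continuous_subspaceT pc) cK.
have hQQ : hausdorff_space (Q * Q)%type.
  by apply: prod_hausdorff; exact: q_hausdorff.
have := compact_closed hQQ cimg; rewrite -openC; congr open.
apply/seteqP; split => [[P P'] /= nK|[P P'] /= rP].
- have [x ex] := qpi_surj P; have [y ey] := qpi_surj P'; subst P P'.
  rewrite qd_pi ltNge; apply/negP => Kxy; apply: nK.
  by exists (x, y).
- move=> [[x y] /= Kxy [ex ey]]; subst P P'.
  by move: rP; rewrite qd_pi ltNge Kxy.
Qed.

End quotient.

Section qspace.
Context (S : topologicalType) (rho : pqm S) (hS : hausdorff_space S)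
  (cS : compact [set: S]).
Local Notation d := (pd rho).
Local Notation Q := (qtype rho).

Lemma qd_ge0 (P P' : Q) : 0 <= qd P P'. Proof. exact: pd_ge0. Qed.
Lemma qd_refl (P : Q) : qd P P = 0. Proof. exact: pd_refl. Qed.
Lemma qd_tri (P P' P'' : Q) : qd P P'' <= qd P P' + qd P' P''.
Proof. exact: pd_tri. Qed.
Lemma qd_sep (P P' : Q) : qd P P' = 0 -> qd P' P = 0 -> P = P'.
Proof. by move=> h1 h2; rewrite -(qpiK P) -(qpiK P'); apply/qpi_eq; split. Qed.
Lemma qd_cont (u : R) : (0 <= u)%R -> open [set pq : Q * Q | u%:E < qd pq.1 pq.2].
Proof. by move=> _; exact: (qd_lsc hS cS). Qed.

Definition qspace : metCH_sep :=
  @MetCHsep Q (@qd S rho) qd_ge0 qd_refl qd_tri qd_sep (q_hausdorff hS cS)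
    (q_compact cS) qd_cont.

Lemma qspace_d x y : mc_d (qpi rho x : qspace) (qpi rho y) = d x y.
Proof. exact: qd_pi. Qed.

Section lift.
Context (Z : metCH_sep) (phi : S -> Z) (cphi : continuous phi)
  (nphi : forall x y, mc_d (phi x) (phi y) <= d x y).

Lemma lift_eqv x y : eqv rho x y -> phi x = phi y.
Proof.
move=> [h1 h2]; apply: mc_d_sep; apply: le0_eq0; rewrite ?mc_d_ge0 //.
- by rewrite -h1; exact: nphi.
- by rewrite -h2; exact: nphi.
Qed.

Lemma qlift_cont : continuous ((phi \o @qrep S rho) : qspace -> Z).
Proof.
apply/continuousP => O oO; apply/qopenE.
have -> : qpi rho @^-1` ((phi \o @qrep S rho) @^-1` O) = phi @^-1` O.
  apply/seteqP; split => x /=.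
  - by rewrite (lift_eqv (qrep_eqv rho x)).
  - by rewrite (lift_eqv (qrep_eqv rho x)).
by move/continuousP : cphi; apply.
Qed.

Lemma qlift_nonexp (P P' : qspace) :
  mc_d ((phi \o @qrep S rho) P) ((phi \o @qrep S rho) P') <= mc_d P P'.
Proof. exact: nphi. Qed.

Definition qlift : mc_hom qspace Z := MCHom qlift_cont qlift_nonexp.

Lemma qlift_pi x : qlift (qpi rho x) = phi x.
Proof. exact: (lift_eqv (qrep_eqv rho x)). Qed.

End lift.

Lemma qpi_cont : continuous (qpi rho : S -> qspace).
Proof. exact: qpi_continuous. Qed.

Lemma qspace_hom_eq (Z : metCH_sep) (f g : mc_hom qspace Z) :
  (forall x, f (qpi rho x) = g (qpi rho x)) -> f = g.
Proof.
move=> H; apply: mc_hom_eq; apply: funext => P.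
by have [x <-] := qpi_surj P; exact: H.
Qed.

End qspace.

Lemma mc_lsc (Z : metCH_sep) : lsc (fun p : Z * Z => mc_d p.1 p.2).
Proof.
move=> r; have [r0|r0] := leP 0%R r; first exact: mc_d_cont.
rewrite (_ : [set _ | _] = setT); first exact: openT.
apply/seteqP; split => // p _ /=; apply: lt_le_trans (mc_d_ge0 _ _).
by rewrite lte_fin.
Qed.

Lemma mc_lsc_comp (X : topologicalType) (Z : metCH_sep) (phi psi : X -> Z) :
  continuous phi -> continuous psi -> lsc (fun p : X * X => mc_d (phi p.1) (psi p.2)).
Proof.
move=> c1 c2 r.
exact: (lsc_comp (prod_map_continuous c1 c2) (@mc_lsc Z) r).
Qed.

Definition copair (A B : topologicalType) (Z : Type) (h : A -> Z) (k : B -> Z)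
  (s : sumT A B) : Z := match s with inl a => h a | inr b => k b end.

Lemma copair_continuous (A B Z : topologicalType) (h : A -> Z) (k : B -> Z) :
  continuous h -> continuous k -> continuous (copair h k).
Proof. by move=> ch ck; apply: sum_continuous. Qed.

Lemma mc_hom_cont (X Y : metCH_sep) (f : mc_hom X Y) : continuous f.
Proof. exact: mc_fun_cont. Qed.

Lemma mc_sum_hausdorff (A B : metCH_sep) : hausdorff_space (sumT A B).
Proof. by apply: sum_hausdorff; exact: mc_hausdorff. Qed.

Lemma mc_sum_compact (A B : metCH_sep) : compact [set: sumT A B].
Proof. by apply: sum_compact; exact: mc_compact. Qed.

Section pushout.
Context (C A B : metCH_sep) (f : mc_hom C A) (g : mc_hom C B).

Definition cocone (Z : metCH_sep) (h : mc_hom A Z) (k : mc_hom B Z) :=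
  forall c, h (f c) = k (g c).

Definition po_set (x y : sumT A B) : set (\bar R) :=
  [set r | r = 0 \/ exists (Z : metCH_sep) (h : mc_hom A Z) (k : mc_hom B Z),
     cocone h k /\ r = mc_d (copair h k x) (copair h k y)].

Definition po_d x y := ereal_sup (po_set x y).

Lemma po_d_ub x y (Z : metCH_sep) (h : mc_hom A Z) (k : mc_hom B Z) :
  cocone h k -> mc_d (copair h k x) (copair h k y) <= po_d x y.
Proof. by move=> hk; apply: ereal_sup_ubound; right; exists Z, h, k. Qed.

Lemma po_d_ge0 x y : 0 <= po_d x y.
Proof. by apply: ereal_sup_ubound; left. Qed.

Lemma po_d_refl x : po_d x x = 0.
Proof.
apply: le0_eq0; first exact: po_d_ge0.
by apply/ereal_supP => _ [->|[Z [h [k [_ ->]]]]]; rewrite ?mc_d_refl.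
Qed.

Lemma po_d_tri x y z : po_d x z <= po_d x y + po_d y z.
Proof.
apply/ereal_supP => _ [->|[Z [h [k [hk ->]]]]].
  by apply: adde_ge0; exact: po_d_ge0.
apply: (le_trans (mc_d_triangle _ (copair h k y) _)).
by apply: leeD; exact: po_d_ub.
Qed.

Lemma po_d_lsc : lsc (fun p : sumT A B * sumT A B => po_d p.1 p.2).
Proof.
apply: lscP => r xy /ereal_sup_gtP [e [->|[Z [h [k [hk ->]]]]] re].
  exists (setT, setT); first by split; exact: filterT.
  by move=> p _; apply: lt_le_trans re _; exact: po_d_ge0.
have cc : continuous (copair h k) by apply: copair_continuous; exact: mc_hom_cont.
have := lsc_near (mc_lsc_comp cc cc) re.
apply: filterS => p /= H; apply: lt_le_trans H _; exact: po_d_ub.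
Qed.

Definition po_pqm := PQM po_d_ge0 po_d_refl po_d_tri po_d_lsc.

Definition po_space := qspace po_pqm (@mc_sum_hausdorff A B) (@mc_sum_compact A B).

Lemma po_iA_cont : continuous (fun a : A => (qpi po_pqm (inl a) : po_space)).
Proof.
move=> a; have := @qpi_cont (sumT A B) po_pqm (@mc_sum_hausdorff A B) (@mc_sum_compact A B).
move=> /(_ (inl a)) h; exact: (continuous_comp (@inl_continuous A B a) h).
Qed.

Lemma po_iB_cont : continuous (fun b : B => (qpi po_pqm (inr b) : po_space)).
Proof.
move=> b; have := @qpi_cont (sumT A B) po_pqm (@mc_sum_hausdorff A B) (@mc_sum_compact A B).
move=> /(_ (inr b)) h; exact: (continuous_comp (@inr_continuous A B b) h).
Qed.

Lemma po_iA_nonexp a a' :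
  mc_d (qpi po_pqm (inl a) : po_space) (qpi po_pqm (inl a')) <= mc_d a a'.
Proof.
rewrite qspace_d /=; apply/ereal_supP => _ [->|[Z [h [k [hk ->]]]]].
  exact: mc_d_ge0.
exact: mc_fun_nonexp.
Qed.

Lemma po_iB_nonexp b b' :
  mc_d (qpi po_pqm (inr b) : po_space) (qpi po_pqm (inr b')) <= mc_d b b'.
Proof.
rewrite qspace_d /=; apply/ereal_supP => _ [->|[Z [h [k [hk ->]]]]].
  exact: mc_d_ge0.
exact: mc_fun_nonexp.
Qed.

Definition po_iA : mc_hom A po_space := MCHom po_iA_cont po_iA_nonexp.
Definition po_iB : mc_hom B po_space := MCHom po_iB_cont po_iB_nonexp.

Lemma po_cocone : cocone po_iA po_iB.
Proof.
move=> c; apply/qpi_eq; split; apply: le0_eq0; rewrite ?po_d_ge0 //;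
  apply/ereal_supP => _ [->|[Z [h [k [hk ->]]]]] //=; by rewrite hk mc_d_refl.
Qed.

Lemma po_universal (Z : metCH_sep) (h : mc_hom A Z) (k : mc_hom B Z) :
  cocone h k -> exists! u : mc_hom po_space Z,
    (forall a, u (po_iA a) = h a) /\ (forall b, u (po_iB b) = k b).
Proof.
move=> hk.
have cc : continuous (copair h k) by apply: copair_continuous; exact: mc_hom_cont.
have nn : forall x y, mc_d (copair h k x) (copair h k y) <= pd po_pqm x y.
  by move=> x y; exact: po_d_ub.
exists (@qlift (sumT A B) po_pqm (@mc_sum_hausdorff A B) (@mc_sum_compact A B) Z (copair h k) cc nn); split.
  by split => [a|b]; exact: qlift_pi.
move=> u' [h1 h2]; apply: qspace_hom_eq => -[a|b].
- by transitivity (h a); [exact: qlift_pi | exact: (esym (h1 a))].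
- by transitivity (k b); [exact: qlift_pi | exact: (esym (h2 b))].
Qed.

End pushout.

Section subspace.
Context (X : topologicalType) (A : set X).

Lemma set_val_continuous : continuous (set_val : set_type A -> X).
Proof. exact: initial_continuous. Qed.

Lemma set_type_openP (O : set (set_type A)) :
  open O -> exists2 U : set X, open U & set_val @^-1` U = O.
Proof. by case=> U oU <-; exists U. Qed.

Lemma set_type_open (U : set X) : open U -> open (set_val @^-1` U : set (set_type A)).
Proof. by move=> oU; exists U. Qed.

Lemma set_type_hausdorff : hausdorff_space X -> hausdorff_space (set_type A).
Proof.
rewrite !open_hausdorff => hX x y neq.
have /hX [[U V] /= [Ux Vy] [oU oV /eqP UV]] : set_val x != set_val y.
  by apply: contra neq => /eqP /val_inj ->.
exists (set_val @^-1` U, set_val @^-1` V) => /=.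
  by rewrite !inE; rewrite !inE in Ux Vy.
split; [exact: set_type_open|exact: set_type_open|].
have h : set_val @^-1` U `&` set_val @^-1` V = set0 :> set (set_type A).
  rewrite -subset0 => z [Uz Vz]; have : (U `&` V) (set_val z) by [].
  by rewrite UV.
by apply/eqP; exact: h.
Qed.

Lemma set_type_compact : compact A -> compact [set: set_type A].
Proof.
move=> /compact_near_coveringP cA; apply/compact_near_coveringP.
move=> I F P FF cov.
have : \near F, A `<=` (fun x => forall h : x \in A, P F (exist _ x h)).
  apply: cA => x Ax.
  have [[U E] /= [Ux FE] UEP] := cov (exist _ x (mem_set Ax)) Logic.I.
  have [U' oU' U'U] : exists2 U' : set X, open_nbhs x U' &
      (set_val @^-1` U' : set (set_type A)) `<=` U.
    move: Ux; rewrite nbhsE => -[O [oO Ox] OU].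
    have [U' oU' eU'] := set_type_openP oO.
    exists U'; last by rewrite eU'.
    by split => //; have : (set_val @^-1` U') (exist _ x (mem_set Ax)) by rewrite eU'.
  exists (U', E) => /=; first by split => //; exact: open_nbhs_nbhs.
  move=> [x' i] /= [U'x' Ei] h; apply: (UEP (exist _ x' h, i)); split => //.
  exact: U'U.
apply: filterS => i H [x h] _; exact: (H x (set_mem h) h).
Qed.

End subspace.

Section equaliser.
Context (X Y : metCH_sep) (u v : mc_hom X Y).

Definition eqset := [set x : X | u x = v x].

Lemma eqset_closed : closed eqset.
Proof.
rewrite -openC openE => x /= neq.
have hY := @mc_hausdorff Y; rewrite open_hausdorff in hY.
have /hY [[U V] /= [Ux Vx] [oU oV /eqP UV]] :
    u x != v x by apply/eqP.
rewrite !inE in Ux Vx.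
have : nbhs x (u @^-1` U `&` v @^-1` V).
  apply: open_nbhs_nbhs; split; last by split.
  apply: openI; by apply: (proj1 (continuousP _)); [exact: mc_fun_cont|].
apply: filterS => z [Uz Vz] ez; have : (U `&` V) (u z) by split => //; rewrite ez.
by rewrite UV.
Qed.

Local Notation E := (set_type eqset).

Definition eq_d (p q : E) := mc_d (set_val p) (set_val q).

Lemma eq_d_ge0 p q : 0 <= eq_d p q. Proof. exact: mc_d_ge0. Qed.
Lemma eq_d_refl p : eq_d p p = 0. Proof. exact: mc_d_refl. Qed.
Lemma eq_d_tri p q r : eq_d p r <= eq_d p q + eq_d q r.
Proof. exact: mc_d_triangle. Qed.
Lemma eq_d_sep p q : eq_d p q = 0 -> eq_d q p = 0 -> p = q.
Proof. by move=> h1 h2; apply: val_inj; exact: mc_d_sep. Qed.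
Lemma eq_d_cont (r : R) : (0 <= r)%R -> open [set pq : E * E | r%:E < eq_d pq.1 pq.2].
Proof.
move=> _; exact: (@mc_lsc_comp _ _ _ _ (@set_val_continuous X eqset) (@set_val_continuous X eqset) r).
Qed.

Definition eq_space : metCH_sep :=
  @MetCHsep E eq_d eq_d_ge0 eq_d_refl eq_d_tri eq_d_sep
    (set_type_hausdorff (@mc_hausdorff X))
    (set_type_compact (subclosed_compact eqset_closed (@mc_compact X) (@subsetT _ _)))
    eq_d_cont.

Lemma eq_incl_nonexp (p q : eq_space) : mc_d (set_val p) (set_val q) <= mc_d p q.
Proof. by []. Qed.

Definition eq_incl : mc_hom eq_space X :=
  @MCHom eq_space X set_val (@set_val_continuous X eqset) eq_incl_nonexp.

Lemma eq_incl_eq (p : eq_space) : u (eq_incl p) = v (eq_incl p).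
Proof. exact: (set_valP p). Qed.

Section factor.
Context (W : metCH_sep) (h : mc_hom W X) (huv : forall w, u (h w) = v (h w)).

Definition eq_fact_fun (w : W) : eq_space := exist _ (h w) (mem_set (huv w)).

Lemma eq_fact_cont : continuous eq_fact_fun.
Proof.
apply/continuousP => O /set_type_openP [U oU <-].
rewrite (_ : _ @^-1` _ = h @^-1` U) //.
by move/continuousP : (@mc_fun_cont _ _ h); apply.
Qed.

Lemma eq_fact_nonexp w w' : mc_d (eq_fact_fun w) (eq_fact_fun w') <= mc_d w w'.
Proof. exact: mc_fun_nonexp. Qed.

Definition eq_fact : mc_hom W eq_space := MCHom eq_fact_cont eq_fact_nonexp.

Lemma eq_factE w : eq_incl (eq_fact w) = h w. Proof. by []. Qed.

End factor.

Lemma eq_incl_inj (p q : eq_space) : eq_incl p = eq_incl q -> p = q.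
Proof. exact: val_inj. Qed.

End equaliser.

Definition emptyT := void.
HB.instance Definition _ := Choice.on emptyT.

Definition eopen (U : set emptyT) := True.
Lemma eopenT : eopen setT. Proof. by []. Qed.
Lemma eopenI : setI_closed eopen. Proof. by []. Qed.
Lemma eopen_bigU (I : Type) (f : I -> set emptyT) :
  (forall i, eopen (f i)) -> eopen (\bigcup_i f i).
Proof. by []. Qed.
HB.instance Definition _ := isOpenTopological.Build emptyT eopenT eopenI eopen_bigU.

Definition e_d (x y : emptyT) : \bar R := match x with end.

Lemma e_d_ge0 x y : 0 <= e_d x y. Proof. by case: x. Qed.
Lemma e_d_refl x : e_d x x = 0. Proof. by case: x. Qed.
Lemma e_d_tri x y z : e_d x z <= e_d x y + e_d y z. Proof. by case: x. Qed.
Lemma e_d_sep x y : e_d x y = 0 -> e_d y x = 0 -> x = y. Proof. by case: x. Qed.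
Lemma e_hausdorff : hausdorff_space emptyT. Proof. by case. Qed.
Lemma e_compact : compact [set: emptyT].
Proof.
rewrite (_ : [set: emptyT] = set0); first exact: compact0.
by apply/seteqP; split => // -[].
Qed.
Lemma e_d_cont (u : R) : (0 <= u)%R ->
  open [set pq : emptyT * emptyT | u%:E < e_d pq.1 pq.2].
Proof.
move=> _; rewrite (_ : [set _ | _] = set0); first exact: open0.
by apply/seteqP; split => // -[[]].
Qed.

Definition e_space : metCH_sep :=
  @MetCHsep emptyT e_d e_d_ge0 e_d_refl e_d_tri e_d_sep e_hausdorff e_compact e_d_cont.

Lemma e_initial (Z : metCH_sep) : exists! f : mc_hom e_space Z, True.
Proof.
have c : continuous (fun x : e_space => match x return Z with end) by case.
have n : forall x y : e_space, mc_d (match x return Z with end) (match y return Z with end) <= mc_d x y.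
  by case.
exists (MCHom c n); split => // f' _; apply: mc_hom_eq; apply: funext; case.
Qed.

Lemma fst_cont (X Y : topologicalType) : continuous (@fst X Y).
Proof.
move=> [x y] W Wn; exists (W, setT) => //=; first by split => //; exact: filterT.
by move=> [a b] [].
Qed.

Lemma snd_cont (X Y : topologicalType) : continuous (@snd X Y).
Proof.
move=> [x y] W Wn; exists (setT, W) => //=; first by split => //; exact: filterT.
by move=> [a b] [].
Qed.

Lemma pair_cont (X Y Z : topologicalType) (f : X -> Y) (g : X -> Z) :
  continuous f -> continuous g -> continuous (fun x => (f x, g x)).
Proof.
move=> cf cg x W [[P Q] /= [Pf Qg] PQW].
have h1 : nbhs x (f @^-1` P) by exact: cf.
have h2 : nbhs x (g @^-1` Q) by exact: cg.
apply: (@filterS _ _ _ (f @^-1` P `&` g @^-1` Q)); last exact: filterI.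
by move=> y [a b]; apply: PQW.
Qed.

Lemma comp_cont (X Y Z : topologicalType) (f : X -> Y) (g : Y -> Z) :
  continuous f -> continuous g -> continuous (g \o f).
Proof. by move=> cf cg x; apply: continuous_comp; [exact: cf|exact: cg]. Qed.

Lemma ge0_nNy (x : \bar R) : 0 <= x -> x != -oo.
Proof. by case: x. Qed.

Lemma inf_addl (T : Type) (F : T -> \bar R) (a b : \bar R) :
  0 <= a -> (forall t, 0 <= F t) -> (forall t, b <= a + F t) ->
  b <= a + ereal_inf (range F).
Proof.
move=> a0 F0 H.
have i0 : 0 <= ereal_inf (range F) by apply/ereal_infP => _ [t _ <-].
case: a a0 H => [r| |] // a0 H.
- rewrite -leeBlDl //; apply/ereal_infP => _ [t _ <-].
  by rewrite leeBlDl //.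
- by rewrite addye ?leey // ge0_nNy.
Qed.

Lemma inf_addr (T : Type) (F : T -> \bar R) (a b : \bar R) :
  0 <= a -> (forall t, 0 <= F t) -> (forall t, b <= F t + a) ->
  b <= ereal_inf (range F) + a.
Proof.
move=> a0 F0 H; rewrite addeC; apply: inf_addl => // t; rewrite addeC; exact: H.
Qed.

Lemma min_le_add (u v a b c : \bar R) : u <= a + b -> v <= a + c ->
  emin u v <= a + emin b c.
Proof.
move=> h1 h2; rewrite {2}/emin; case: ifP => _.
- by apply: le_trans h1; exact: emin_l.
- by apply: le_trans h2; exact: emin_r.
Qed.

Lemma min_le_addr (u v a b c : \bar R) : u <= b + a -> v <= c + a ->
  emin u v <= emin b c + a.
Proof.
move=> h1 h2; rewrite addeC; apply: min_le_add; rewrite addeC //.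
Qed.

Lemma emin_yl x : emin +oo x = x.
Proof. by rewrite /emin; case: ifP => // h; apply/eqP; rewrite eq_le h leey. Qed.

Lemma emin_yr x : emin x +oo = x.
Proof. by rewrite /emin leey. Qed.

Lemma min_ge0 (a b : \bar R) : 0 <= a -> 0 <= b -> 0 <= emin a b.
Proof. by move=> h1 h2; exact: emin_glb. Qed.

(* gluing along a map that does not decrease distances                  *)

Section glue.
Context (C A B : metCH_sep) (f : mc_hom C A) (g : mc_hom C B)
  (hf : forall c c', mc_d c c' <= mc_d (f c) (f c')).
Local Notation S := (sumT A B).

Definition sD (x y : S) : \bar R :=
  match x, y with
  | inl a, inl a' => mc_d a a'
  | inr b, inr b' => mc_d b b'
  | _, _ => +oo
  end.

Lemma sD_ge0 x y : 0 <= sD x y.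
Proof. by case: x y => ? [] ? /=; rewrite ?mc_d_ge0 ?leey. Qed.

Lemma sD_refl x : sD x x = 0.
Proof. by case: x => ? /=; rewrite mc_d_refl. Qed.

Lemma sD_tri x y z : sD x z <= sD x y + sD y z.
Proof.
case: x y z => [a|b] [a'|b'] [a''|b''] /=; rewrite ?mc_d_triangle //;
  by rewrite ?addey ?addye ?leey // ge0_nNy // mc_d_ge0.
Qed.

Lemma sD_lsc : lsc (fun p : S * S => sD p.1 p.2).
Proof.
apply: lscP => r [[a|b] [a'|b']] /= rxy.
- have : nbhs (a, a') [set p : A * A | r%:E < mc_d p.1 p.2].
    by apply: open_nbhs_nbhs; split => //; exact: mc_lsc.
  case=> [[P Q] /= [Pa Qa'] PQ].
  exists (inl @` P, inl @` Q); first by split; exact: inl_nbhs.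
  by move=> [_ _] /= [[p Pp <-] [q Qq <-]] /=; apply: (PQ (p, q)).
- exists (inl @` setT, inr @` setT).
    by split; [apply: inl_nbhs; exact: filterT|apply: inr_nbhs; exact: filterT].
  by move=> [_ _] /= [[p _ <-] [q _ <-]] /=; exact: ltry.
- exists (inr @` setT, inl @` setT).
    by split; [apply: inr_nbhs; exact: filterT|apply: inl_nbhs; exact: filterT].
  by move=> [_ _] /= [[p _ <-] [q _ <-]] /=; exact: ltry.
- have : nbhs (b, b') [set p : B * B | r%:E < mc_d p.1 p.2].
    by apply: open_nbhs_nbhs; split => //; exact: mc_lsc.
  case=> [[P Q] /= [Pa Qa'] PQ].
  exists (inr @` P, inr @` Q); first by split; exact: inr_nbhs.
  by move=> [_ _] /= [[p Pp <-] [q Qq <-]] /=; apply: (PQ (p, q)).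
Qed.

Definition r1 (c : C) : S := inl (f c).
Definition r2 (c : C) : S := inr (g c).
Definition eg (c c' : C) := mc_d (g c) (g c').

Lemma eg_ge0 c c' : 0 <= eg c c'. Proof. exact: mc_d_ge0. Qed.

Lemma eg_tri c1 c2 c3 : eg c1 c3 <= eg c1 c2 + eg c2 c3.
Proof. exact: mc_d_triangle. Qed.

Lemma eg_key c c' :
  [/\ eg c c' <= sD (r1 c) (r1 c'), eg c c' <= sD (r1 c) (r2 c'),
      eg c c' <= sD (r2 c) (r1 c') & eg c c' <= sD (r2 c) (r2 c')].
Proof.
split => //=; rewrite ?leey //.
by apply: le_trans (hf c c'); exact: mc_fun_nonexp.
Qed.

Definition dl x c := emin (sD x (r1 c)) (sD x (r2 c)).
Definition dr c y := emin (sD (r1 c) y) (sD (r2 c) y).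

Lemma dl_ge0 x c : 0 <= dl x c. Proof. by apply: min_ge0; exact: sD_ge0. Qed.
Lemma dr_ge0 c y : 0 <= dr c y. Proof. by apply: min_ge0; exact: sD_ge0. Qed.

Lemma dl_le x y c : dl x c <= sD x y + dl y c.
Proof. by apply: min_le_add; exact: sD_tri. Qed.

Lemma dr_le c x y : dr c y <= dr c x + sD x y.
Proof. by apply: min_le_addr; exact: sD_tri. Qed.

Lemma eg_le c x c' : eg c c' <= dr c x + dl x c'.
Proof.
have [k11 k12 k21 k22] := eg_key c c'.
rewrite /dr /dl /emin.
case: ifP => _; case: ifP => _; apply: le_trans (sD_tri _ x _) => //.
Qed.

Definition J x y (cc : C * C) := dl x cc.1 + (eg cc.1 cc.2 + dr cc.2 y).

Lemma J_ge0 x y cc : 0 <= J x y cc.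
Proof. by rewrite /J; apply: adde_ge0; [exact: dl_ge0|apply: adde_ge0; [exact: eg_ge0|exact: dr_ge0]]. Qed.

Lemma J_tri1 x y z cc : J x z cc <= sD x y + J y z cc.
Proof.
rewrite /J; apply: (@le_trans _ _ ((sD x y + dl y cc.1) + (eg cc.1 cc.2 + dr cc.2 z))).
  by apply: leeD => //; exact: dl_le.
by rewrite -addeA.
Qed.

Lemma J_tri2 x y z cc : J x z cc <= J x y cc + sD y z.
Proof.
rewrite /J -!addeA; apply: leeD => //; apply: leeD => //; exact: dr_le.
Qed.

Lemma J_tri3 x y z c1 c1' c2 c2' :
  J x z (c1, c2') <= J x y (c1, c1') + J y z (c2, c2').
Proof.
rewrite /J /=.
apply: (@le_trans _ _ (dl x c1 + (eg c1 c1' + (dr c1' y + (dl y c2 +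
   (eg c2 c2' + dr c2' z)))))); last by rewrite -!addeA.
apply: leeD => //.
apply: (@le_trans _ _ ((eg c1 c1' + (dr c1' y + (dl y c2 + eg c2 c2'))) + dr c2' z));
  last by rewrite -!addeA.
apply: leeD => //.
apply: (le_trans (eg_tri c1 c1' c2')); apply: leeD => //.
apply: (le_trans (eg_tri c1' c2 c2')); rewrite addeA; apply: leeD => //.
exact: eg_le.
Qed.

Definition Iv x y := ereal_inf (range (J x y)).

Lemma Iv_ge0 x y : 0 <= Iv x y.
Proof. by apply/ereal_infP => _ [cc _ <-]; exact: J_ge0. Qed.

Lemma Iv_le x y cc : Iv x y <= J x y cc.
Proof. by apply: ereal_inf_lbound; exists cc. Qed.

Lemma Iv_tri1 x y z : Iv x z <= sD x y + Iv y z.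
Proof.
apply: inf_addl; [exact: sD_ge0|exact: J_ge0|] => cc.
by apply: le_trans (Iv_le _ _ cc) _; exact: J_tri1.
Qed.

Lemma Iv_tri2 x y z : Iv x z <= Iv x y + sD y z.
Proof.
apply: inf_addr; [exact: sD_ge0|exact: J_ge0|] => cc.
by apply: le_trans (Iv_le _ _ cc) _; exact: J_tri2.
Qed.

Lemma Iv_tri3 x y z : Iv x z <= Iv x y + Iv y z.
Proof.
apply: inf_addr; [exact: Iv_ge0|exact: J_ge0|] => -[c1 c1'].
apply: inf_addl; [exact: J_ge0|exact: J_ge0|] => -[c2 c2'].
by apply: le_trans (Iv_le _ _ (c1, c2')) _; exact: J_tri3.
Qed.

Definition gd x y := emin (sD x y) (Iv x y).

Lemma gd_ge0 x y : 0 <= gd x y.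
Proof. by apply: min_ge0; [exact: sD_ge0|exact: Iv_ge0]. Qed.

Lemma gd_refl x : gd x x = 0.
Proof. by apply: le0_eq0; [exact: gd_ge0|apply: le_trans (emin_l _ _) _; rewrite sD_refl]. Qed.

Lemma gd_tri x y z : gd x z <= gd x y + gd y z.
Proof.
rewrite {2}/gd {2}/gd /emin; case: ifP => _; case: ifP => _.
- by apply: le_trans (emin_l _ _) _; exact: sD_tri.
- by apply: le_trans (emin_r _ _) _; exact: Iv_tri1.
- by apply: le_trans (emin_r _ _) _; exact: Iv_tri2.
- by apply: le_trans (emin_r _ _) _; exact: Iv_tri3.
Qed.

Lemma CC_compact : compact [set: C * C].
Proof. by rewrite -setXTT; apply: compact_setX; exact: mc_compact. Qed.

Lemma Iv_lsc : lsc (fun p : S * S => Iv p.1 p.2).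
Proof.
apply: (@inf_lsc (S * S)%type (C * C)%type (fun p cc => J p.1 p.2 cc) CC_compact).
have c11 : continuous (fun q : (S * S) * (C * C) => q.1.1).
  exact: comp_cont (@fst_cont _ _) (@fst_cont _ _).
have c12 : continuous (fun q : (S * S) * (C * C) => q.1.2).
  exact: comp_cont (@fst_cont _ _) (@snd_cont _ _).
have c21 : continuous (fun q : (S * S) * (C * C) => q.2.1).
  exact: comp_cont (@snd_cont _ _) (@fst_cont _ _).
have c22 : continuous (fun q : (S * S) * (C * C) => q.2.2).
  exact: comp_cont (@snd_cont _ _) (@snd_cont _ _).
have cr1 : continuous r1.
  exact: comp_cont (@mc_hom_cont _ _ f) (@inl_continuous A B).
have cr2 : continuous r2.
  exact: comp_cont (@mc_hom_cont _ _ g) (@inr_continuous A B).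
have lD (u v : (S * S) * (C * C) -> S) : continuous u -> continuous v ->
    lsc (fun q => sD (u q) (v q)).
  by move=> cu cv r; exact: (lsc_comp (pair_cont cu cv) sD_lsc r).
apply: lsc_add.
- by move=> q; exact: dl_ge0.
- move=> q; apply: adde_ge0; [exact: eg_ge0|exact: dr_ge0].
- by apply: lsc_min; apply: lD => //; apply: comp_cont.
apply: lsc_add.
- by move=> q; exact: eg_ge0.
- by move=> q; exact: dr_ge0.
- move=> r.
  have cg1 : continuous (fun q : (S * S) * (C * C) => g q.2.1).
    exact: (comp_cont c21 (@mc_hom_cont _ _ g)).
  have cg2 : continuous (fun q : (S * S) * (C * C) => g q.2.2).
    exact: (comp_cont c22 (@mc_hom_cont _ _ g)).
  exact: (lsc_comp (pair_cont cg1 cg2) (@mc_lsc B) r).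
- by apply: lsc_min; apply: lD => //; apply: comp_cont.
Qed.

Lemma gd_lsc : lsc (fun p : S * S => gd p.1 p.2).
Proof. exact: lsc_min sD_lsc Iv_lsc. Qed.

Definition gl_pqm := PQM gd_ge0 gd_refl gd_tri gd_lsc.

Definition gl_space := qspace gl_pqm (@mc_sum_hausdorff A B) (@mc_sum_compact A B).

Lemma gl_iA_cont : continuous (fun a : A => (qpi gl_pqm (inl a) : gl_space)).
Proof.
move=> a; have := @qpi_cont (sumT A B) gl_pqm (@mc_sum_hausdorff A B) (@mc_sum_compact A B).
move=> /(_ (inl a)) h; exact: (continuous_comp (@inl_continuous A B a) h).
Qed.

Lemma gl_iB_cont : continuous (fun b : B => (qpi gl_pqm (inr b) : gl_space)).
Proof.
move=> b; have := @qpi_cont (sumT A B) gl_pqm (@mc_sum_hausdorff A B) (@mc_sum_compact A B).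
move=> /(_ (inr b)) h; exact: (continuous_comp (@inr_continuous A B b) h).
Qed.

Lemma gl_iA_nonexp a a' :
  mc_d (qpi gl_pqm (inl a) : gl_space) (qpi gl_pqm (inl a')) <= mc_d a a'.
Proof. by rewrite qspace_d /=; exact: emin_l. Qed.

Lemma gl_iB_nonexp b b' :
  mc_d (qpi gl_pqm (inr b) : gl_space) (qpi gl_pqm (inr b')) <= mc_d b b'.
Proof. by rewrite qspace_d /=; exact: emin_l. Qed.

Definition gl_iA : mc_hom A gl_space := MCHom gl_iA_cont gl_iA_nonexp.
Definition gl_iB : mc_hom B gl_space := MCHom gl_iB_cont gl_iB_nonexp.

Lemma gl_cocone c : gl_iA (f c) = gl_iB (g c).
Proof.
apply/qpi_eq; split; apply: le0_eq0; rewrite ?gd_ge0 //=;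
  apply: le_trans (emin_r _ _) _; apply: le_trans (Iv_le _ _ (c, c)) _;
  by rewrite /J /dl /dr /eg /= !mc_d_refl ?emin_yl ?emin_yr !adde0.
Qed.

Lemma gl_iB_iso b b' : mc_d b b' <= mc_d (gl_iB b) (gl_iB b').
Proof.
have E : mc_d (gl_iB b) (gl_iB b') = gd (inr b) (inr b').
  exact: qspace_d.
rewrite E /gd /=; apply: emin_glb => //.
apply/ereal_infP => _ [[c c'] _ <-]; rewrite /J /dl /dr /eg /= emin_yl emin_yl.
apply: (le_trans (mc_d_triangle _ (g c) _)); apply: leeD => //.
exact: mc_d_triangle.
Qed.

Lemma gl_diag a b : gl_iA a = gl_iB b ->
  exists c, mc_d a (f c) = 0 /\ mc_d (g c) b = 0.
Proof.
move=> /qpi_eq [h _]; move: h; rewrite /= /gd /=.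
rewrite emin_yl.
move=> I0; apply: contrapT => /forallNP H.
have G0 : forall c, 0 < mc_d a (f c) + mc_d (g c) b.
  move=> c; rewrite lt0e adde_ge0 ?mc_d_ge0 // andbT; apply/negP => /eqP E.
  apply: (H c); split; apply: le0_eq0; rewrite ?mc_d_ge0 // -E.
  - by rewrite leeDl // mc_d_ge0.
  - by rewrite leeDr // mc_d_ge0.
have cfa : continuous (fun c : C => (a, f c)).
  by apply: pair_cont => //; [move=> ?; exact: cvg_cst|exact: mc_hom_cont].
have cgb : continuous (fun c : C => (g c, b)).
  by apply: pair_cont => //; [exact: mc_hom_cont|move=> ?; exact: cvg_cst].
have lG : lsc (fun c => mc_d a (f c) + mc_d (g c) b).
  apply: lsc_add; [by move=> ?; exact: mc_d_ge0|by move=> ?; exact: mc_d_ge0| |].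
  - by move=> r; exact: (lsc_comp cfa (@mc_lsc A) r).
  - by move=> r; exact: (lsc_comp cgb (@mc_lsc B) r).
have := inf_pos (@mc_compact C) lG G0.
rewrite ltNge => /negP; apply; rewrite -I0.
apply/ereal_infP => _ [[c c'] _ <-].
apply: (@le_trans _ _ (mc_d a (f c) + mc_d (g c) b)); first exact: ereal_inf_lbound.
rewrite /J /dl /dr /eg /= emin_yr emin_yl.
apply: leeD => //; exact: mc_d_triangle.
Qed.

End glue.

Lemma mc_comp_eq (X Y Z : metCH_sep) (u : mc_hom Y Z) (i : mc_hom X Y) (h : mc_hom X Z) :
  mc_comp u i = h <-> forall x, u (i x) = h x.
Proof.
split => [<- //|H]; apply: mc_hom_eq; apply: funext => x; exact: H.
Qed.

Lemma mc_comp_eq2 (X Y Y' Z : metCH_sep) (u : mc_hom Y Z) (i : mc_hom X Y)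
  (u' : mc_hom Y' Z) (i' : mc_hom X Y') :
  mc_comp u i = mc_comp u' i' <-> forall x, u (i x) = u' (i' x).
Proof.
split => [E x|H]; first by have := congr1 (fun k : mc_hom X Z => k x) E.
apply: mc_hom_eq; apply: funext => x; exact: H.
Qed.

Lemma pushout_exists (C A B : metCH_sep) (f : mc_hom C A) (g : mc_hom C B) :
  exists (P : metCH_sep) (i : mc_hom A P) (j : mc_hom B P),
    mc_comp i f = mc_comp j g /\
    forall (Q : metCH_sep) (q1 : mc_hom A Q) (q2 : mc_hom B Q),
      mc_comp q1 f = mc_comp q2 g ->
      exists! w : mc_hom P Q, mc_comp w i = q1 /\ mc_comp w j = q2.
Proof.
exists (po_space f g), (po_iA f g), (po_iB f g); split.
  by apply/mc_comp_eq2; exact: po_cocone.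
move=> Q q1 q2 /mc_comp_eq2 hq.
have [w [[w1 w2] wu]] := po_universal hq.
exists w; split; first by split; apply/mc_comp_eq.
move=> w' [/mc_comp_eq h1 /mc_comp_eq h2]; exact: wu.
Qed.

Lemma equaliser_exists (X Y : metCH_sep) (u v : mc_hom X Y) :
  mc_comp u (eq_incl u v) = mc_comp v (eq_incl u v) /\
  forall (Z : metCH_sep) (h : mc_hom Z X), mc_comp u h = mc_comp v h ->
    exists! k : mc_hom Z (eq_space u v), mc_comp (eq_incl u v) k = h.
Proof.
split; first by apply/mc_comp_eq2; exact: eq_incl_eq.
move=> Z h /mc_comp_eq2 huv; exists (eq_fact huv); split.
  by apply/mc_comp_eq.
move=> k' /mc_comp_eq hk; apply: mc_hom_eq; apply: funext => z.
by apply: eq_incl_inj; rewrite hk.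
Qed.

Section stable.
Context (C A B P D : metCH_sep) (f : mc_hom C A) (g : mc_hom C B)
  (u v : mc_hom A D) (p1 : mc_hom A P) (p2 : mc_hom B P).
Hypothesis fuv : mc_comp u f = mc_comp v f.
Hypothesis feq : forall (Z : metCH_sep) (h : mc_hom Z A), mc_comp u h = mc_comp v h ->
  exists! k : mc_hom Z C, mc_comp f k = h.
Hypothesis pcomm : mc_comp p1 f = mc_comp p2 g.
Hypothesis puniv : forall (Q : metCH_sep) (q1 : mc_hom A Q) (q2 : mc_hom B Q),
  mc_comp q1 f = mc_comp q2 g ->
  exists! w : mc_hom P Q, mc_comp w p1 = q1 /\ mc_comp w p2 = q2.

Lemma f_iso c c' : mc_d c c' <= mc_d (f c) (f c').
Proof.
have huv : forall c, u (f c) = v (f c) by apply/mc_comp_eq2.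
pose k' := eq_fact huv.
have [k [hk _]] := feq (proj1 (equaliser_exists u v)).
have [k0 [_ k0u]] := feq fuv.
have e1 : mc_comp k k' = mc_id C.
  have -> : mc_comp k k' = k0 by apply: esym; apply: k0u;
    apply/mc_comp_eq => x /=; move/mc_comp_eq : hk => ->.
  by apply: k0u; apply/mc_comp_eq.
have ek x : k (k' x) = x by have := congr1 (fun m : mc_hom C C => m x) e1.
rewrite -{1}(ek c) -{1}(ek c').
exact: (@mc_fun_nonexp _ _ k (k' c) (k' c')).
Qed.

Lemma p2_iso b b' : mc_d b b' <= mc_d (p2 b) (p2 b').
Proof.
have [w [[_ w2] _]] := puniv (proj2 (mc_comp_eq2 _ _ _ _) (@gl_cocone C A B f g f_iso)).
apply: (le_trans (gl_iB_iso g f_iso b b')).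
move/mc_comp_eq : w2 => w2; rewrite -!w2.
exact: mc_fun_nonexp.
Qed.

Lemma p2_inj b b' : p2 b = p2 b' -> b = b'.
Proof.
move=> E; apply: mc_d_sep; apply: le0_eq0; rewrite ?mc_d_ge0 //.
- by apply: le_trans (p2_iso b b') _; rewrite E mc_d_refl.
- by apply: le_trans (p2_iso b' b) _; rewrite E mc_d_refl.
Qed.

Lemma p2_regular : exists (Z : metCH_sep) (U V : mc_hom P Z),
  mc_comp U p2 = mc_comp V p2 /\
  forall (W : metCH_sep) (h : mc_hom W P), mc_comp U h = mc_comp V h ->
    exists! k : mc_hom W B, mc_comp p2 k = h.
Proof.
exists (gl_space p2 p2_iso), (gl_iA p2 p2_iso), (gl_iB p2 p2_iso); split.
  by apply/mc_comp_eq2; exact: gl_cocone.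
move=> W h /mc_comp_eq2 hUV.
have H : forall w, exists b, p2 b = h w.
  move=> w; have [b [h1 h2]] := gl_diag (hUV w).
  by exists b; apply: mc_d_sep.
pose k (w : W) : B := sval (cid (H w)).
have hk w : p2 (k w) = h w by rewrite /k; case: (cid _).
have ck : continuous k.
  apply/continuous_closedP => F cF.
  have -> : k @^-1` F = h @^-1` (p2 @` F).
    apply/seteqP; split => w /=.
    - by move=> Fk; exists (k w) => //; exact: hk.
    - by move=> [b Fb E]; rewrite -hk in E; rewrite -(p2_inj E).
  move/continuous_closedP : (@mc_fun_cont _ _ h); apply.
  apply: compact_closed; first exact: mc_hausdorff.
  apply: continuous_compact; first exact/continuous_subspaceT/mc_fun_cont.
  exact: (subclosed_compact cF (@mc_compact B)).
have nk w w' : mc_d (k w) (k w') <= mc_d w w'.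
  by apply: le_trans (p2_iso _ _) _; rewrite !hk; exact: mc_fun_nonexp.
exists (MCHom ck nk); split; first by apply/mc_comp_eq.
move=> k' /mc_comp_eq hk'; apply: mc_hom_eq; apply: funext => w /=.
by apply: p2_inj; rewrite hk hk'.
Qed.

End stable.

Theorem theorem4p8 : regular_category (op MetCH_sep).
Proof.
split.
- split.
  + by exists e_space => a; exact: (e_initial a).
  + move=> a b c f g.
    have [P [i [j [h1 h2]]]] := pushout_exists f g.
    by exists P, i, j; split; [exact: h1|exact: h2].
- move=> a b f p p1 p2 _.
  exists (eq_space p1 p2), (eq_incl p1 p2).
  exact: (equaliser_exists p1 p2).
- move=> a b c f g p p1 p2 [d [u [v [fuv feq]]]] [pcomm puniv].
  have [Z [U [V [h1 h2]]]] := p2_regular fuv feq puniv.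
  by exists Z, U, V; split; [exact: h1|exact: h2].
Qed.
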